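(* Let $\mathcal{X}$ be a finite set of $n$ items and consider the (full-rank) context dependent random utility model (CDM) on $\mathcal{X}$ with parameter vector $u=(u_{xz})_{x\neq z}\in\mathbb{R}^{n(n-1)}$. Let $\mathcal{C}_{\mathcal{D}}$ be the collection of distinct choice sets appearing in a dataset $\mathcal{D}$. Suppose there are two distinct sizes $k\neq k'$ with $2\le k,k'\le n$, at least one of which is not in $\{2,n\}$, such that $\mathcal{C}_{\mathcal{D}}$ contains every subset of $\mathcal{X}$ of size $k$ and every subset of $\mathcal{X}$ of size $k'$. Then the CDM is identifiable from $\mathcal{D}$: if $u,u'\in\mathbb{R}^{n(n-1)}$ satisfy $P_u(x\mid C)=P_{u'}(x\mid C)$ for all $C\in\mathcal{C}_{\mathcal{D}}$ and all $x\in C$, then $u'-u=\alpha\mathbf{1}$ for some $\alpha\in\mathbb{R}$.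
   Context: A CDM on a finite universe $\mathcal{X}$ of $n$ items has one real parameter $u_{xz}$ for each ordered pair of distinct items $x\neq z$; collect them into $u\in\mathbb{R}^{n(n-1)}$. For a choice set $C\subseteq\mathcal{X}$ with $|C|\ge 2$ and $x\in C$, the probability of choosing $x$ from $C$ is $P_u(x\mid C)=\dfrac{\exp\big(\sum_{z\in C\setminus\{x\}}u_{xz}\big)}{\sum_{y\in C}\exp\big(\sum_{z\in C\setminus\{y\}}u_{yz}\big)}$. Adding the same constant to every $u_{xz}$ does not change any choice probability, so identifiability is understood up to such a shift. A dataset $\mathcal{D}$ is a finite list of pairs $(x_j,C_j)$ with $x_j\in C_j\subseteq\mathcal{X}$, $|C_j|\ge 2$ (item $x_j$ chosen from set $C_j$); $\mathcal{C}_{\mathcal{D}}$ denotes the collection of distinct sets $C_j$ occurring in $\mathcal{D}$. $\mathbf{1}$ is the all-ones vector. *)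

(* Defs.v *)
From HB Require Import structures.
From mathcomp Require Import all_boot all_order all_algebra.
From mathcomp Require Import reals.
From mathcomp Require Import sequences.
From mathcomp.analysis Require Import exp.
Set Implicit Arguments. Unset Strict Implicit. Unset Printing Implicit Defensive.
Import Order.TTheory GRing.Theory Num.Theory.
Local Open Scope ring_scope.

(* A CDM on the universe 'I_n: parameter u x z for x <> z (diagonal entries
   u x x are never used). *)
Definition cdm_param (R : realType) (n : nat) := 'I_n -> 'I_n -> R.

Definition cdm_prob (R : realType) (n : nat) (u : cdm_param R n)
    (x : 'I_n) (C : {set 'I_n}) : R :=
  expR (\sum_(z in C :\ x) u x z) /
  \sum_(y in C) expR (\sum_(z in C :\ y) u y z).

Definition dataset (n : nat) := seq ('I_n * {set 'I_n}).

Definition wf_dataset n (D : dataset n) : Prop :=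
  forall p, p \in D -> (p.1 \in p.2) /\ (2 <= #|p.2|)%N.

Definition choice_sets n (D : dataset n) : seq {set 'I_n} := undup (map snd D).

(* Main.v *)
Require Import Defs.
From HB Require Import structures.
From mathcomp Require Import all_boot all_order all_algebra.
From mathcomp Require Import reals.
From mathcomp Require Import sequences.
From mathcomp.analysis Require Import exp.
From mathcomp Require Import ring lra zify.
Import Order.TTheory GRing.Theory Num.Theory.
Local Open Scope ring_scope.
Set Implicit Arguments. Unset Strict Implicit.

Lemma ex_subset (T : finType) (B : {set T}) (j : nat) :
  (j <= #|B|)%N -> exists A : {set T}, A \subset B /\ #|A| = j.
Proof.
elim: j => [|j IH] hj.
  by exists set0; rewrite sub0set cards0.
have [A [sAB cA]] := IH (ltnW hj).
have : (0 < #|B :\: A|)%N by rewrite cardsD (setIidPr sAB) cA subn_gt0.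
case/card_gt0P => a; rewrite inE => /andP [naA aB].
exists (a |: A); split; first by rewrite subUset sub1set aB sAB.
by rewrite cardsU1 naA cA.
Qed.

Definition G (R : realType) n (d : 'I_n -> 'I_n -> R) (C : {set 'I_n}) x :=
  \sum_(z in C) d x z - d x x.

Lemma notin_sub n (A S : {set 'I_n}) a : A \subset ~: S -> a \in S -> a \notin A.
Proof. move=> sA aS; apply/negP => /(subsetP sA); by rewrite inE aS. Qed.

Lemma star (R : realType) n (d : 'I_n -> 'I_n -> R) (m : nat) :
  (2 < m < n)%N ->
  (forall (C : {set 'I_n}) x y, #|C| = m -> x \in C -> y \in C -> G d C x = G d C y) ->
  forall x y w v, x != y -> x != w -> x != v -> y != w -> y != v -> w != v ->
  d x w - d y w = d x v - d y v.
Proof.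
move=> hm Hm x y w v xy xw xv yw yv wv.
set S := x |: (y |: (w |: [set v])).
have cS : #|S| = 4%N.
  rewrite /S !cardsU1 cards1 !inE !negb_or xy xw xv yw yv wv /=; done.
have cB : #|~: S| = (n - 4)%N.
  have := cardsC S; rewrite cS card_ord => h; lia.
have [A' [sA cA]] := ex_subset (j := (m - 3)%N) (B := ~: S) ltac:(rewrite cB; lia).
have xA : x \notin A' by apply: notin_sub sA _; rewrite !inE eqxx.
have yA : y \notin A' by apply: notin_sub sA _; rewrite !inE eqxx !orbT.
have wA : w \notin A' by apply: notin_sub sA _; rewrite !inE eqxx !orbT.
have vA : v \notin A' by apply: notin_sub sA _; rewrite !inE eqxx !orbT.
set A := x |: (y |: A').
have wA2 : w \notin A by rewrite !inE negb_or eq_sym xw negb_or eq_sym yw.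
have vA2 : v \notin A by rewrite !inE negb_or eq_sym xv negb_or eq_sym yv.
have cA2 : #|A| = (m - 1)%N.
  rewrite /A !cardsU1 cA !inE negb_or xy xA yA /=; move: hm; clear; lia.
have c1 : #|w |: A| = m by rewrite cardsU1 wA2 cA2; move: hm; clear; lia.
have c2 : #|v |: A| = m by rewrite cardsU1 vA2 cA2; move: hm; clear; lia.
have xinA : x \in A by rewrite !inE eqxx.
have yinA : y \in A by rewrite !inE eqxx orbT.
have h1 := Hm _ x y c1 ltac:(by rewrite inE xinA orbT) ltac:(by rewrite inE yinA orbT).
have h2 := Hm _ x y c2 ltac:(by rewrite inE xinA orbT) ltac:(by rewrite inE yinA orbT).
move: h1 h2; rewrite /G !(big_setU1 _ wA2) !(big_setU1 _ vA2) /=.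
clear -d. lra.
Qed.

Lemma two (R : realType) n (d : 'I_n -> 'I_n -> R) (s : nat) :
  (2 <= s <= n)%N ->
  (forall (C : {set 'I_n}) x y, #|C| = s -> x \in C -> y \in C -> G d C x = G d C y) ->
  (forall x y w v, x != y -> x != w -> x != v -> y != w -> y != v -> w != v ->
    d x w - d y w = d x v - d y v) ->
  forall x w z0, x != w -> x != z0 -> w != z0 ->
  (s - 2)%:R * (d x z0 - d w z0) + (d x w - d w x) = 0.
Proof.
move=> hs Hs Hst x w z0 xw xz wz.
set S := x |: [set w].
have cS : #|S| = 2%N by rewrite /S cardsU1 cards1 !inE xw.
have cB : #|~: S| = (n - 2)%N.
  have := cardsC S; rewrite cS card_ord => h; move: h; clear; lia.
have [A' [sA cA]] := ex_subset (j := (s - 2)%N) (B := ~: S)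
  ltac:(rewrite cB; move: hs; clear; lia).
have xA : x \notin A' by apply: notin_sub sA _; rewrite !inE eqxx.
have wA : w \notin A' by apply: notin_sub sA _; rewrite !inE eqxx !orbT.
have xwA : x \notin w |: A' by rewrite !inE negb_or xw xA.
set C := x |: (w |: A').
have cC : #|C| = s.
  rewrite /C !cardsU1 cA xwA wA /=; move: hs; clear; lia.
have h := Hs C x w cC ltac:(by rewrite !inE eqxx) ltac:(by rewrite !inE eqxx orbT).
move: h; rewrite /G !(big_setU1 _ xwA) !(big_setU1 _ wA) /=.
have E : \sum_(i in A') d x i - \sum_(i in A') d w i = (s - 2)%:R * (d x z0 - d w z0).
  rewrite -sumrB (eq_bigr (fun _ => d x z0 - d w z0)); last first.
    move=> z zA.
    have zx : z != x by apply: contraNneq xA => <-.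
    have zw : z != w by apply: contraNneq wA => <-.
    have [-> //|zz0] := eqVneq z z0.
    apply: Hst => //; by rewrite eq_sym.
  by rewrite sumr_const cA mulr_natl.
move: E; clear -d; lra.
Qed.

Lemma third n (x w : 'I_n) : (2 < n)%N -> exists z, (x != z) && (w != z).
Proof.
move=> hn.
have : (0 < #|~: [set x; w]|)%N.
  have := cardsC [set x; w]; rewrite card_ord.
  have := cards2 x w; move=> h1 h2.
  have : (#|[set x; w]| <= 2)%N by rewrite h1; case: (x != w).
  move: h2 hn; clear; lia.
case/card_gt0P => z; rewrite !inE negb_or => /andP [a b].
by exists z; rewrite eq_sym a eq_sym b.
Qed.

Lemma core (R : realType) n (d : 'I_n -> 'I_n -> R) (m l : nat) :
  (2 < m < n)%N -> (2 <= l <= n)%N -> m != l ->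
  (forall (C : {set 'I_n}) x y, #|C| = m -> x \in C -> y \in C -> G d C x = G d C y) ->
  (forall (C : {set 'I_n}) x y, #|C| = l -> x \in C -> y \in C -> G d C x = G d C y) ->
  forall x z x' z', x != z -> x' != z' -> d x z = d x' z'.
Proof.
move=> hm hl ml Hm Hl.
have Hst := star hm Hm.
have hm' : (2 <= m <= n)%N by move: hm; clear; lia.
have key : forall x w z0, x != w -> x != z0 -> w != z0 ->
    d x z0 = d w z0 /\ d x w = d w x.
  move=> x w z0 xw xz wz.
  have e1 := two hm' Hm Hst xw xz wz.
  have e2 := two hl Hl Hst xw xz wz.
  have ne : (m - 2)%:R - (l - 2)%:R != 0 :> R.
    rewrite subr_eq0 eqr_nat; move: hm hl ml; clear; lia.
  have E0 : ((m - 2)%:R - (l - 2)%:R) * (d x z0 - d w z0) = 0 :> R.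
    move: e1 e2; clear; lra.
  move/eqP: E0; rewrite mulf_eq0 (negbTE ne) /= subr_eq0 => /eqP E0.
  split=> //; move: e1; rewrite E0 subrr mulr0 add0r => /eqP; rewrite subr_eq0 => /eqP //.
have Rw : forall x y z, x != z -> y != z -> d x z = d y z.
  move=> x y z xz yz; have [-> //|xy] := eqVneq x y.
  by case: (key x y z xy xz yz).
have Sy : forall x w, x != w -> d x w = d w x.
  move=> x w xw.
  have [z /andP [xz wz]] := third x w ltac:(move: hm; clear; lia).
  by case: (key x w z xw xz wz).
have Cc : forall x y z, z != x -> y != x -> d x z = d x y.
  move=> x y z zx yx; have [-> //|zy] := eqVneq z y.
  have xz : x != z by rewrite eq_sym.
  have yz : y != z by rewrite eq_sym.
  transitivity (d y z); first exact: Rw.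
  transitivity (d z y); first exact: Sy.
  apply: Rw => //; by rewrite eq_sym.
move=> x z x' z' xz xz'.
have [e|ne] := eqVneq x' z.
  subst x'; rewrite (Sy x z xz); apply: Cc => //; by rewrite eq_sym.
rewrite (Rw x x' z) //; apply: Cc; by rewrite eq_sym.
Qed.

Lemma Zpos (R : realType) n (u : cdm_param R n) (C : {set 'I_n}) x : x \in C ->
  0 < \sum_(y in C) expR (\sum_(z in C :\ y) u y z).
Proof.
move=> xC; rewrite (big_setD1 _ xC) /=.
have h1 := expR_gt0 (\sum_(z in C :\ x) u x z).
have h2 : 0 <= \sum_(y in C :\ x) expR (\sum_(z in C :\ y) u y z).
  by apply: sumr_ge0 => i _; apply: expR_ge0.
move: h1 h2; clear; lra.
Qed.

Lemma probE (R : realType) n (u u' : cdm_param R n) (C : {set 'I_n}) x : x \in C ->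
  cdm_prob u x C = cdm_prob u' x C ->
  expR (\sum_(z in C :\ x) (u' x z - u x z)) =
  (\sum_(y in C) expR (\sum_(z in C :\ y) u' y z)) / \sum_(y in C) expR (\sum_(z in C :\ y) u y z).
Proof.
move=> xC; rewrite /cdm_prob sumrB expRB.
have Z1 := Zpos u xC; have Z2 := Zpos u' xC.
set a := \sum_(z in C :\ x) u x z; set a' := \sum_(z in C :\ x) u' x z.
set Z := \sum_(y in C) _; set Z' := \sum_(y in C) _.
have ea := expR_gt0 a.
move=> h.
have e : expR a' = expR a / Z * Z' by rewrite h divfK // gt_eqF.
rewrite e; field; rewrite ?gt_eqF //.
Qed.

Lemma probG (R : realType) n (u u' : cdm_param R n) (C : {set 'I_n}) x y :
  x \in C -> y \in C ->
  cdm_prob u x C = cdm_prob u' x C -> cdm_prob u y C = cdm_prob u' y C ->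
  G (fun a b => u' a b - u a b) C x = G (fun a b => u' a b - u a b) C y.
Proof.
move=> xC yC hx hy.
have := probE xC hx; rewrite -(probE yC hy) => /expR_inj e.
by rewrite /G (big_setD1 _ xC) (big_setD1 _ yC) /= e; ring.
Qed.

Unset Implicit Arguments.
Set Strict Implicit.

Theorem theorem1 (R : realType) (n : nat) (D : dataset n) (k k' : nat) :
  wf_dataset D ->
  k != k' ->
  (2 <= k <= n)%N -> (2 <= k' <= n)%N ->
  (k \notin [:: 2%N; n]) || (k' \notin [:: 2%N; n]) ->
  (forall C : {set 'I_n}, #|C| = k -> C \in choice_sets D) ->
  (forall C : {set 'I_n}, #|C| = k' -> C \in choice_sets D) ->
  forall u u' : cdm_param R n,
    (forall C, C \in choice_sets D -> forall x, x \in C ->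
       cdm_prob u x C = cdm_prob u' x C) ->
    exists alpha : R, forall x z : 'I_n, x != z -> u' x z - u x z = alpha.
Proof.
move=> _ kk' hk hk' hnot Hk Hk' u u' Hp.
pose d := fun a b => u' a b - u a b.
have HG : forall s, (forall C : {set 'I_n}, #|C| = s -> C \in choice_sets D) ->
    forall (C : {set 'I_n}) x y, #|C| = s -> x \in C -> y \in C -> G d C x = G d C y.
  move=> s Hs C x y cC xC yC; apply: probG => //; apply: Hp => //; exact: Hs.
have main : forall x z x' z', x != z -> x' != z' -> d x z = d x' z'.
  case/orP: hnot; rewrite !inE negb_or => /andP [h2 hn].
  - apply: (core (m:=k) (l:=k')) => //; last by [apply: HG]; last by [apply: HG].
    move: hk h2 hn; clear; lia.
  - apply: (core (m:=k') (l:=k)) => //; last by [apply: HG]; last by [apply: HG].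
    + move: hk' h2 hn; clear; lia.
    + by rewrite eq_sym.
case: (boolP [exists p : 'I_n * 'I_n, p.1 != p.2]).
  case/existsP => [[a b] /= ab].
  exists (d a b) => x z xz; exact: main.
move=> /existsPn hne; exists 0 => x z xz.
by have := hne (x, z); rewrite /= xz.
Qed.
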